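(* Let $m,n\ge 1$, let $A\in\mathbb{R}^{m\times n}$ be a nonzero matrix of rank $r$ with thin singular value decomposition $A=U_A\Sigma_A V_A^\top$ (so $U_A\in\mathbb{R}^{m\times r}$ has orthonormal columns), let $y\in\mathbb{R}^m$ be nonzero and set $\bar y=y/\|y\|_2$. Let $\mathcal{P}$ be the set of $m\times m$ permutation matrices and $$\operatorname{conv}(\mathcal{P})=\{B\in\mathbb{R}^{m\times m}: B^\top e=e,\ Be=e,\ B\ge 0\}$$ the set of $m\times m$ doubly stochastic matrices, where $e\in\mathbb{R}^m$ is the all-ones vector and $B\ge 0$ means entrywise nonnegativity. Define $f:\mathbb{R}^{m\times m}\to\mathbb{R}$ by $$f(B)=-\big\|(\bar y^\top\otimes U_A^\top)\,\mathrm{vec}(B)\big\|_2^2,$$ where $\otimes$ is the Kronecker product and $\mathrm{vec}$ stacks the columns of a matrix. If the problem $\min_{\Pi\in\mathcal{P}} f(\Pi)$ has a unique minimizer $\hat\Pi$, then $\hat\Pi$ is also the unique minimizer of $\min_{B\in\operatorname{conv}(\mathcal{P})} f(B)$.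
   Context: Notation: $\|\cdot\|_2$ is the Euclidean norm. The function $f$ satisfies $f(B)=-\bar y^\top B^\top U_AU_A^\top B\bar y$, and is concave. *)

(* Defs.v *)
From HB Require Import structures.
From mathcomp Require Import all_boot all_order all_algebra.
From mathcomp Require Import reals.
From mathcomp Require Import mxtens.
Set Implicit Arguments. Unset Strict Implicit. Unset Printing Implicit Defensive.
Import Order.TTheory GRing.Theory Num.Theory.
Local Open Scope ring_scope.

Definition norm2 {R : realType} {k : nat} (v : 'cV[R]_k) : R :=
  Num.sqrt (\sum_(i < k) v i 0 ^+ 2).

(* vec(B): stacks the columns of B : 'M_(m,n) into a column of length n*m;
   entry j*m + i (= mxtens_index (j,i)) is B i j, consistent with the
   Kronecker-product indexing of tensmx (A *t B). *)
Definition vecmx {R : realType} {m n : nat} (B : 'M[R]_(m, n)) : 'cV[R]_(n * m) :=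
  \col_k B (mxtens_unindex k).2 (mxtens_unindex k).1.

Definition ones {R : realType} (m : nat) : 'cV[R]_m := const_mx 1.

Definition doubly_stochastic {R : realType} {m : nat} (B : 'M[R]_m) : Prop :=
  B^T *m ones m = ones m /\ B *m ones m = ones m /\ (forall i j, 0 <= B i j).

Definition thin_svd {R : realType} {m n r : nat} (A : 'M[R]_(m, n))
  (U : 'M[R]_(m, r)) (s : 'rV[R]_r) (V : 'M[R]_(n, r)) : Prop :=
  [/\ r = \rank A, U^T *m U = 1%:M, V^T *m V = 1%:M,
      (forall i, 0 < s 0 i) /\ (forall i j : 'I_r, (i <= j)%N -> s 0 j <= s 0 i)
    & A = U *m diag_mx s *m V^T].

Definition fobj {R : realType} {m r : nat} (U : 'M[R]_(m, r)) (ybar : 'cV[R]_m)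
  (B : 'M[R]_m) : R :=
  - (norm2 ((ybar^T *t U^T) *m vecmx B)) ^+ 2.

(* Main.v *)
Require Import Defs.
From HB Require Import structures.
From mathcomp Require Import all_boot all_order all_algebra.
From mathcomp Require Import reals.
From mathcomp Require Import mxtens.
From mathcomp Require Import fingroup perm ring lra zify.
Import Order.TTheory GRing.Theory Num.Theory.
Local Open Scope ring_scope.

Section S.
Variable R : realType.

Lemma dsP m (B : 'M[R]_m) : doubly_stochastic B <->
  [/\ forall i, \sum_j B i j = 1, forall j, \sum_i B i j = 1 & forall i j, 0 <= B i j].
Proof.
split.
- move=> [c [r p]]; split => //.
  + move=> i; move/matrixP: r => /(_ i 0); rewrite !mxE => <-.
    by apply: eq_bigr => j _; rewrite !mxE mulr1.
  + move=> j; move/matrixP: c => /(_ j 0); rewrite !mxE => <-.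
    by apply: eq_bigr => i _; rewrite !mxE mulr1.
- move=> [r c p]; split; [|split] => //; apply/matrixP => i k; rewrite !mxE.
  + by rewrite -(c i); apply: eq_bigr => j _; rewrite !mxE mulr1.
  + by rewrite -(r i); apply: eq_bigr => j _; rewrite !mxE mulr1.
Qed.

Lemma perm_mx_entry m (s : 'S_m) i j : (perm_mx s : 'M[R]_m) i j = (s i == j)%:R.
Proof. by rewrite /perm_mx !mxE. Qed.

Lemma perm_ds m (s : 'S_m) : doubly_stochastic (perm_mx s : 'M[R]_m).
Proof.
apply/dsP; split.
- move=> i; under eq_bigr do rewrite perm_mx_entry.
  rewrite (bigD1 (s i)) //= eqxx big1 ?addr0 // => j /negPf; by rewrite eq_sym => ->.
- move=> j; under eq_bigr do rewrite perm_mx_entry.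
  rewrite (bigD1 ((s^-1)%g j)) //= permKV eqxx big1 ?addr0 // => i ne.
  suff -> : (s i == j) = false by [].
  apply/negP => /eqP e; move: ne; by rewrite -e permK eqxx.
- by move=> i j; rewrite perm_mx_entry ler0n.
Qed.

Lemma ds_le1 m (B : 'M[R]_m) i j : doubly_stochastic B -> B i j <= 1.
Proof.
move=> /dsP[r c p]; rewrite -(r i) (bigD1 j) //= lerDl.
by apply: sumr_ge0 => k _.
Qed.

Definition frac {m} (B : 'M[R]_m) := [set p : 'I_m * 'I_m | 0 < B p.1 p.2 < 1].

Lemma ds_int_perm m (B : 'M[R]_m) : doubly_stochastic B -> frac B = set0 ->
  is_perm_mx B.
Proof.
move=> ds F0.
have ds' := ds; move/dsP: ds' => [r c p].
have int i j : B i j = 0 \/ B i j = 1.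
  have : (i, j) \notin frac B by rewrite F0 inE.
  rewrite inE /= negb_and -!leNgt => /orP[h|h].
    by left; apply/le_anti; rewrite h p.
  by right; apply/le_anti; rewrite h ds_le1.
pose f i := [arg max_(j > i) B i j]%O.
have f1 i : B i (f i) = 1.
  rewrite /f; case: arg_maxP => // j _ jmax.
  case: (int i j) => // B0.
  have : \sum_k B i k <= \sum_(k < m) (0:R).
    by apply: ler_sum => k _; rewrite -B0; exact: jmax.
  by rewrite big1_eq r; lra.
have fne i k : k != f i -> B i k = 0.
  move=> ne; have := r i; rewrite (bigD1 (f i)) //= f1 => e.
  have s0 : \sum_(k | k != f i) B i k = 0 by lra.
  have := psumr_eq0P (fun k _ => p i k) s0; by apply.
have finj : injective f.
  move=> i i' e; apply/eqP; apply: contraT => ne.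
  have := c (f i); rewrite (bigD1 i) //= (bigD1 i') /=; last by rewrite eq_sym ne.
  rewrite f1 e f1 => /eqP; rewrite -subr_eq0.
  have : 0 <= \sum_(k | (k != i) && (k != i')) B k (f i') by apply: sumr_ge0.
  lra.
apply/is_perm_mxP; exists (perm finj); apply/matrixP => i j.
rewrite perm_mx_entry permE; case: eqP => [<-|/eqP ne]; first by rewrite f1.
by rewrite fne // eq_sym.
Qed.
Lemma fobjE m r (U : 'M[R]_(m, r)) yb (B : 'M[R]_m) :
  fobj U yb B = - \sum_i (((yb^T *t U^T) *m vecmx B) i 0) ^+ 2.
Proof.
rewrite /fobj /norm2 sqr_sqrtr //; apply: sumr_ge0 => i _; exact: sqr_ge0.
Qed.

Lemma fobj_concave m r (U : 'M[R]_(m, r)) yb (X Y : 'M[R]_m) (l : R) :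
  0 <= l <= 1 ->
  l * fobj U yb X + (1 - l) * fobj U yb Y <= fobj U yb (l *: X + (1 - l) *: Y).
Proof.
move=> /andP[l0 l1]; rewrite !fobjE.
have -> : vecmx (l *: X + (1 - l) *: Y) = l *: vecmx X + (1 - l) *: vecmx Y.
  by apply/matrixP => i j; rewrite !mxE.
rewrite mulmxDr -!scalemxAr !mulrN !mulr_sumr -!sumrN -big_split /=.
apply: ler_sum => i _.
set P := (_ *m vecmx X); set Q := (_ *m vecmx Y).
rewrite [X in _ <= - X ^+ 2]mxE [X in _ <= - (X + _) ^+ 2]mxE [X in _ <= - (_ + X) ^+ 2]mxE.
set a := P i 0; set b := Q i 0.
have : 0 <= l * (1 - l) * (a - b) ^+ 2.
  by apply: mulr_ge0; [apply: mulr_ge0; lra | exact: sqr_ge0].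
have -> : l * (1 - l) * (a - b) ^+ 2 = l * a ^+ 2 + (1 - l) * b ^+ 2 - (l * a + (1 - l) * b) ^+ 2 by ring.
lra.
Qed.
Lemma nz_entry p q (A : 'M[R]_(p, q)) : A != 0 -> exists i j, A i j != 0.
Proof.
move=> nz; case/boolP: [exists i, exists j, A i j != 0].
  by move=> /existsP[i /existsP[j h]]; exists i, j.
move=> h; case/negP: nz; apply/eqP/matrixP => i j; rewrite mxE.
apply/eqP; apply: contraNT h => h; apply/existsP; exists i; apply/existsP; by exists j.
Qed.

Lemma row_two m (X : 'M[R]_m) i j0 :
  (forall j, 0 <= X i j) -> \sum_j X i j = 1 -> 0 < X i j0 < 1 ->
  (2 <= #|[set j | (0 < X i j < 1)%R]|)%N.
Proof.
move=> p r /andP[a b].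
have le1 j : X i j <= 1 by rewrite -r (bigD1 j) //= lerDl sumr_ge0.
case/boolP: [exists j, (j != j0) && (0 < X i j < 1)].
  move=> /existsP[j1 /andP[ne h]].
  have <- : #|[set j0; j1]| = 2%N by rewrite cards2 eq_sym ne.
  apply: subset_leq_card; apply/subsetP => x; rewrite !inE => /orP[]/eqP->;
   rewrite ?h //; lra.
rewrite negb_exists => /forallP hall.
have int j : j != j0 -> X i j = 0 \/ X i j = 1.
  move=> ne; have := hall j; rewrite ne /= negb_and -!leNgt => /orP[h|h].
    by left; apply/le_anti; rewrite h p.
  by right; apply/le_anti; rewrite h le1.
exfalso; move: r; rewrite (bigD1 j0) //=.
case/boolP: [exists j, (j != j0) && (X i j == 1)].
  move=> /existsP[j1 /andP[ne /eqP e]].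
  rewrite (bigD1 j1) //= e.
  have : 0 <= \sum_(k | (k != j0) && (k != j1)) X i k by apply: sumr_ge0.
  lra.
rewrite negb_exists => /forallP h0.
rewrite big1; first lra.
move=> j ne; case: (int j ne) => // e; have := h0 j; by rewrite ne e eqxx.
Qed.


Lemma card_sum (T : finType) (A : {set T}) : #|A| = (\sum_x (x \in A : nat))%N.
Proof. by rewrite -sum1_card big_mkcond /=; apply: eq_bigr => x _; case: (x \in A). Qed.

Lemma sum_ev (T : finType) (A : {set T}) x : x \in A ->
  \sum_(a < #|A|) ((x == enum_val a)%:R : R) = 1.
Proof.
move=> xA; rewrite -(big_enum_val (fun y => (x == y)%:R : R)) /=.
rewrite (bigD1 x) //= eqxx big1 ?addr0 // => y /andP[_ ne].
by rewrite eq_sym (negPf ne).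
Qed.

Lemma sum_pair1 m (a b i : 'I_m) : \sum_j (((a, b) == (i, j))%:R : R) = (a == i)%:R.
Proof.
case: (eqVneq a i) => [->|ne].
  rewrite (bigD1 b) //= eqxx big1 ?addr0 // => j nj.
  by rewrite xpair_eqE eqxx /= eq_sym (negPf nj).
by rewrite big1 // => j _; rewrite xpair_eqE (negPf ne).
Qed.

Lemma sum_pair2 m (a b j : 'I_m) : \sum_i (((a, b) == (i, j))%:R : R) = (b == j)%:R.
Proof.
case: (eqVneq b j) => [->|ne].
  rewrite (bigD1 a) //= eqxx big1 ?addr0 // => i ni.
  by rewrite xpair_eqE eq_sym (negPf ni).
by rewrite big1 // => i _; rewrite xpair_eqE (negPf ne) andbF.
Qed.

Lemma exists_dir m (B : 'M[R]_m) : doubly_stochastic B -> frac B != set0 ->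
  exists D : 'M[R]_m, [/\ D != 0, (forall i j, (i, j) \notin frac B -> D i j = 0),
    (forall i, \sum_j D i j = 0) & (forall j, \sum_i D i j = 0)].
Proof.
move=> ds nF; move/dsP: (ds) => [r c p].
set F := frac B.
pose Rt := [set i | [exists j, (i, j) \in F]].
pose Ct := [set j | [exists i, (i, j) \in F]].
have cardF : #|F| = (\sum_i \sum_j ((i, j) \in F : nat))%N.
  rewrite card_sum pair_big /=; apply: eq_bigr => -[i j] _ //.
have cardF' : #|F| = (\sum_j \sum_i ((i, j) \in F : nat))%N.
  by rewrite cardF exchange_big.
have rowc i : (2 * (i \in Rt) <= \sum_j ((i, j) \in F : nat))%N.
  case/boolP: (i \in Rt) => [|_]; last by rewrite muln0.
  rewrite inE => /existsP[j0 hj0]; rewrite muln1.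
  have := @row_two m B i j0 (p i) (r i).
  rewrite inE in hj0; move=> /(_ hj0); rewrite card_sum.
  move=> h; apply: (leq_trans h); apply: eq_leq; apply: eq_bigr => j _.
  by rewrite /F /frac !inE.
have colc j : (2 * (j \in Ct) <= \sum_i ((i, j) \in F : nat))%N.
  case/boolP: (j \in Ct) => [|_]; last by rewrite muln0.
  rewrite inE => /existsP[i0 hi0]; rewrite muln1.
  have p' : forall i, 0 <= B^T j i by move=> i; rewrite mxE.
  have c' : \sum_i B^T j i = 1 by rewrite -(c j); apply: eq_bigr => i _; rewrite mxE.
  have := @row_two m B^T j i0 p' c'.
  rewrite inE /= in hi0; rewrite mxE; move=> /(_ hi0); rewrite card_sum.
  move=> h; apply: (leq_trans h); apply: eq_leq; apply: eq_bigr => i _.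
  by rewrite /F /frac !inE mxE.
have hr : (2 * #|Rt| <= #|F|)%N.
  by rewrite cardF card_sum big_distrr /=; apply: leq_sum => i _.
have hc : (2 * #|Ct| <= #|F|)%N.
  by rewrite cardF' card_sum big_distrr /=; apply: leq_sum => j _.
have hk : (#|Rt| + #|Ct| <= #|F|)%N by lia.
have [p0 p0F] : exists p0, p0 \in F.
  by case/set0Pn: nF => x xF; exists x.
have Rt0 : (0 < #|Rt|)%N.
  apply/card_gt0P; exists p0.1; rewrite inE; apply/existsP; exists p0.2.
  by rewrite -surjective_pairing.
pose ev (q : 'I_#|F|) : 'I_m * 'I_m := enum_val q.
pose M : 'M[R]_(#|F|, #|Rt| + #|Ct|) :=
  row_mx (\matrix_(q, a) (((ev q).1 == enum_val a)%:R : R))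
         (\matrix_(q, b) (((ev q).2 == enum_val b)%:R : R)).
pose w : 'cV[R]_(#|Rt| + #|Ct|) := col_mx (const_mx 1) (const_mx (-1)).
have evF q : ev q \in F by exact: enum_valP.
have ev1 q : (ev q).1 \in Rt.
  by rewrite inE; apply/existsP; exists (ev q).2; rewrite -surjective_pairing.
have ev2 q : (ev q).2 \in Ct.
  by rewrite inE; apply/existsP; exists (ev q).1; rewrite -surjective_pairing.
have Mw : M *m w = 0.
  apply/matrixP => q z; rewrite mul_row_col [in RHS]mxE [LHS]mxE !mxE.
  under eq_bigr do rewrite !mxE mulr1.
  under [X in _ + X = _]eq_bigr do rewrite !mxE mulrN1.
  by rewrite sumrN !sum_ev // subrr.
have rkM : (\rank M < #|Rt| + #|Ct|)%N.
  have h1 : (w^T <= kermx M^T)%MS by rewrite sub_kermx -trmx_mul Mw trmx0 eqxx.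
  have wnz : w^T != 0.
    apply/negP => /eqP/matrixP/(_ 0 (lshift #|Ct| (Ordinal Rt0))).
    by rewrite mxE col_mxEu !mxE => /eqP; rewrite oner_eq0.
  have := mxrankS h1; rewrite mxrank_ker rank_rV wnz mxrank_tr.
  by move=> h; lia.
have kz : kermx M != 0 by rewrite kermx_eq0 -row_leq_rank -ltnNge; lia.
have [i0 [j0 hij]] := @nz_entry _ _ _ kz.
pose v := row i0 (kermx M).
have vM : v *m M = 0 by rewrite -row_mul mulmx_ker row0.
have vnz : v != 0 by apply/negP => /eqP/matrixP/(_ 0 j0); rewrite [LHS]mxE [RHS]mxE => e; rewrite e eqxx in hij.
have [z [q0 vq0]] := @nz_entry _ _ _ vnz.
rewrite (ord1 z) in vq0.
pose D : 'M[R]_m := \matrix_(i, j) \sum_q v 0 q * ((ev q == (i, j))%:R).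
exists D; split.
- apply/negP => /eqP/matrixP/(_ (ev q0).1 (ev q0).2).
  rewrite !mxE -surjective_pairing (bigD1 q0) //= eqxx mulr1 big1 ?addr0.
    by move=> e; move: vq0; rewrite e eqxx.
  by move=> q ne; rewrite (inj_eq enum_val_inj) (negPf ne) mulr0.
- move=> i j nin; rewrite mxE big1 // => q _.
  case: eqP => [e|_]; last by rewrite mulr0.
  by move: (evF q); rewrite e (negPf nin).
- move=> i.
  have -> : \sum_j D i j = \sum_q v 0 q * ((ev q).1 == i)%:R.
    under eq_bigr do rewrite mxE.
    rewrite exchange_big; apply: eq_bigr => q _; rewrite -mulr_sumr; congr (_ * _).
    by case: (ev q) => a b; rewrite sum_pair1.
  case/boolP: (i \in Rt) => Hi.
    transitivity ((v *m M) 0 (lshift #|Ct| (enum_rank_in Hi i))); last by rewrite vM mxE.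
    rewrite mxE; apply: eq_bigr => q _.
    rewrite /M row_mxEl; congr (_ * _); by rewrite mxE enum_rankK_in // eq_sym.
  rewrite big1 // => q _; case: eqP => [e|_]; last by rewrite mulr0.
  by move: (ev1 q); rewrite e (negPf Hi).
- move=> j.
  have -> : \sum_i D i j = \sum_q v 0 q * ((ev q).2 == j)%:R.
    under eq_bigr do rewrite mxE.
    rewrite exchange_big; apply: eq_bigr => q _; rewrite -mulr_sumr; congr (_ * _).
    by case: (ev q) => a b; rewrite sum_pair2.
  case/boolP: (j \in Ct) => Hj.
    transitivity ((v *m M) 0 (rshift #|Rt| (enum_rank_in Hj j))); last by rewrite vM mxE.
    rewrite mxE; apply: eq_bigr => q _.
    rewrite /M row_mxEr; congr (_ * _); by rewrite mxE enum_rankK_in // eq_sym.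
  rewrite big1 // => q _; case: eqP => [e|_]; last by rewrite mulr0.
  by move: (ev2 q); rewrite e (negPf Hj).
Qed.


Lemma perturb m (B D : 'M[R]_m) : doubly_stochastic B ->
  (forall i j, (i, j) \notin frac B -> D i j = 0) ->
  (forall i, \sum_j D i j = 0) -> (forall j, \sum_i D i j = 0) ->
  (exists i j, D i j < 0) ->
  exists t, 0 < t /\ doubly_stochastic (B + t *: D) /\
            (#|frac (B + t *: D)| < #|frac B|)%N.
Proof.
move=> ds sD rD cD [i0 [j0 neg0]].
move/dsP: (ds) => [r c p].
pose P := fun q : 'I_m * 'I_m => D q.1 q.2 < 0.
pose G := fun q : 'I_m * 'I_m => B q.1 q.2 / - D q.1 q.2.
have P0 : P (i0, j0) by [].
case: (@arg_minP _ _ _ (i0, j0) P G P0) => q Pq qmin.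
set t := G q.
have qF : q \in frac B.
  apply: contraT => nq; move: Pq; rewrite /P; case: q nq {qmin t} => a b nq.
  by rewrite sD // ltxx.
have Bq : 0 < B q.1 q.2 by move: qF; rewrite inE => /andP[].
have Dq : D q.1 q.2 < 0 := Pq.
have t0 : 0 < t by rewrite /t /G divr_gt0 // oppr_gt0.
have tq : B q.1 q.2 + t * D q.1 q.2 = 0.
  have hD : D q.1 q.2 != 0 by rewrite lt_eqF.
  rewrite /t /G; field; by rewrite hD.
exists t; split => //; split.
- apply/dsP; split.
  + move=> i; under eq_bigr do rewrite !mxE.
    by rewrite big_split /= -mulr_sumr rD r mulr0 addr0.
  + move=> j; under eq_bigr do rewrite !mxE.
    by rewrite big_split /= -mulr_sumr cD c mulr0 addr0.
  + move=> i j; rewrite !mxE.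
    case: (ltP (D i j) 0) => hD; last by apply: addr_ge0 => //; apply: mulr_ge0 => //; apply: ltW.
    have := qmin (i, j) hD; rewrite /G /= -/t => tle.
    have nD : 0 < - D i j by rewrite oppr_gt0.
    have : t * - D i j <= B i j.
      rewrite -(ler_pM2r nD) in tle.
      by rewrite (le_trans tle) // divfK // gt_eqF.
    lra.
- apply: proper_card; apply/properP; split.
  + apply/subsetP => x; apply: contraTT => nx.
    rewrite inE !mxE; case: x nx => a b nx /=; rewrite sD // mulr0 addr0.
    by move: nx; rewrite inE.
  + exists q => //; rewrite inE !mxE tq ltxx.
    by [].
Qed.


Lemma neg_entry m (D : 'M[R]_m) : D != 0 -> (forall i, \sum_j D i j = 0) ->
  exists i j, D i j < 0.
Proof.
move=> nz rD; have [i [j hij]] := @nz_entry _ _ D nz.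
case/boolP: [exists k, D i k < 0].
  by move=> /existsP[k hk]; exists i, k.
rewrite negb_exists => /forallP hk.
have ge k : 0 <= D i k by have := hk k; rewrite -leNgt.
have : D i j <= \sum_k D i k by rewrite (bigD1 j) //= lerDl sumr_ge0.
rewrite rD => h; exfalso; move/negP: hij; apply; apply/eqP/le_anti.
by rewrite h ge.
Qed.

Lemma comb_lt (a b c l : R) : 0 < l -> 0 < 1 - l -> a < b -> a <= c ->
  a < l * b + (1 - l) * c.
Proof.
move=> l0 l1 ab ac.
have h1 : 0 < l * (b - a) by rewrite mulr_gt0 // subr_gt0.
have h2 : 0 <= (1 - l) * (c - a) by apply: mulr_ge0; [apply: ltW | rewrite subr_ge0].
have -> : l * b + (1 - l) * c = a + l * (b - a) + (1 - l) * (c - a) by ring.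
set x := l * (b - a) in h1 *; set y := (1 - l) * (c - a) in h2 *; lra.
Qed.

Lemma main_ind m r (U : 'M[R]_(m, r)) yb (Ph : 'M[R]_m) :
  (forall Pi, is_perm_mx Pi -> Pi != Ph -> fobj U yb Ph < fobj U yb Pi) ->
  forall n (B : 'M[R]_m), (#|frac B| <= n)%N -> doubly_stochastic B -> B != Ph ->
  fobj U yb Ph < fobj U yb B.
Proof.
move=> hP; elim=> [|n IH] B hn ds ne.
  apply: hP ne; apply: ds_int_perm => //; apply/eqP; rewrite -cards_eq0; lia.
case/boolP: (frac B == set0) => [/eqP F0|nF].
  by apply: hP ne; apply: ds_int_perm.
have [D [Dnz sD rD cD]] := @exists_dir _ _ ds nF.
have [t1 [t1p [ds1 c1]]] := @perturb _ _ _ ds sD rD cD (@neg_entry _ _ Dnz rD).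
have sD' : forall i j, (i, j) \notin frac B -> (- D) i j = 0.
  by move=> i j h; rewrite mxE sD ?oppr0.
have rD' : forall i, \sum_j (- D) i j = 0.
  by move=> i; under eq_bigr do rewrite mxE; rewrite sumrN rD oppr0.
have cD' : forall j, \sum_i (- D) i j = 0.
  by move=> j; under eq_bigr do rewrite mxE; rewrite sumrN cD oppr0.
have Dnz' : - D != 0 by rewrite oppr_eq0.
have [t2 [t2p [ds2 c2]]] := @perturb _ _ _ ds sD' rD' cD' (@neg_entry _ _ Dnz' rD').
set B1 := B + t1 *: D in ds1 c1.
set B2 := B + t2 *: - D in ds2 c2.
have weak X : (#|frac X| < #|frac B|)%N -> doubly_stochastic X ->
    fobj U yb Ph <= fobj U yb X.
  move=> hX dX; case: (eqVneq X Ph) => [->|nX]; first by [].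
  by apply: ltW; apply: IH => //; rewrite -ltnS (leq_trans hX hn).
have f1 := weak _ c1 ds1.
have f2 := weak _ c2 ds2.
pose l := t2 / (t1 + t2).
have l0 : 0 < l by rewrite divr_gt0 // addr_gt0.
have l1 : 0 < 1 - l.
  rewrite subr_gt0 /l ltr_pdivrMr ?addr_gt0 // mul1r ltrDr //.
have eB : B = l *: B1 + (1 - l) *: B2.
  apply/matrixP => i j; rewrite !mxE /l; field.
  by rewrite gt_eqF // addr_gt0.
have conc := @fobj_concave m r U yb B1 B2 l.
have lr : 0 <= l <= 1 by apply/andP; split; [exact: ltW | rewrite -subr_ge0; exact: ltW].
rewrite -eB in conc.
have {conc} conc := conc lr.
have : B1 != Ph \/ B2 != Ph.
case: (eqVneq B1 Ph) => [e1|]; last by left.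
case: (eqVneq B2 Ph) => [e2|]; last by right.
exfalso; move/negP: Dnz; apply; apply/eqP.
have : B1 = B2 := etrans e1 (esym e2).
  rewrite /B1 /B2 => /addrI e.
  have : (t1 + t2) *: D = 0 by rewrite scalerDl e scalerN addrC subrr.
  move/eqP; rewrite scaler_eq0 => /orP[|/eqP //].
  by rewrite gt_eqF // addr_gt0.
move=> hor; apply: (lt_le_trans _ conc); case: hor => [n1|n2].
  have s1 : fobj U yb Ph < fobj U yb B1.
    by apply: IH => //; rewrite -ltnS (leq_trans c1 hn).
  exact: (@comb_lt _ _ _ _ l0 l1 s1 f2).
have s2 : fobj U yb Ph < fobj U yb B2.
  by apply: IH => //; rewrite -ltnS (leq_trans c2 hn).
have e : 1 - (1 - l) = l by ring.
have l0' : 0 < 1 - (1 - l) by rewrite e.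
have h := @comb_lt (fobj U yb Ph) (fobj U yb B2) (fobj U yb B1) (1 - l) l1 l0' s2 f1.
by rewrite e addrC in h.
Qed.

End S.

Theorem proposition1 (R : realType) (m n r : nat) (A : 'M[R]_(m, n))
  (U : 'M[R]_(m, r)) (s : 'rV[R]_r) (V : 'M[R]_(n, r)) (y : 'cV[R]_m)
  (Pihat : 'M[R]_m) :
  (0 < m)%N -> (0 < n)%N -> A != 0 -> thin_svd A U s V -> y != 0 ->
  let ybar := (norm2 y)^-1 *: y in
  is_perm_mx Pihat ->
  (forall Pi : 'M[R]_m, is_perm_mx Pi -> Pi != Pihat ->
     fobj U ybar Pihat < fobj U ybar Pi) ->
  doubly_stochastic Pihat /\
  (forall B : 'M[R]_m, doubly_stochastic B -> B != Pihat ->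
     fobj U ybar Pihat < fobj U ybar B).
Proof.
move=> m0 n0 A0 svd y0 ybar isP hmin; split.
  by case/is_perm_mxP: isP => sg ->; apply: perm_ds.
move=> B dsB ne.
exact: (@main_ind R m r U ybar Pihat hmin _ B (leqnn _) dsB ne).
Qed.
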